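(* Let $G$ be a group with identity $e$, $A=\{0,1\}$, $S\subseteq G$ finite with $e\in S$, and suppose $(\mathcal P,f)$ generates a local map $\mu:A^S\to A$. Then $e$ is essential for $\mu$ if and only if there exist $z,w$ with $z\neq w$, $\mathrm{Res}_e(z)=\mathrm{Res}_e(w)$, and either $z,w\in\mathcal P^c$ or $z,w\in\mathcal P$.
   Context: $A^S$ is the set of functions $S\to A$. For $s\in S$, $\mathrm{Res}_s(z)=z|_{S\setminus\{s\}}$. An element $s\in S$ is essential for $\mu$ if there exist $z,w\in A^S$ with $\mathrm{Res}_s(z)=\mathrm{Res}_s(w)$ but $\mu(z)\neq\mu(w)$. The pair $(\mathcal P,f)$ generates $\mu$ if $\mathcal P=\{z\in A^S:\mu(z)\neq z(e)\}$ and $f:\mathcal P\to A$ is the restriction of $\mu$ to $\mathcal P$; $\mathcal P^c=A^S\setminus\mathcal P$. *)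

(* Defs.v *)
From Stdlib Require Import List.
Set Implicit Arguments.

Definition is_group (G : Type) (mul : G -> G -> G) (inv : G -> G) (e : G) : Prop :=
  (forall x y z, mul x (mul y z) = mul (mul x y) z) /\
  (forall x, mul e x = x) /\ (forall x, mul x e = x) /\
  (forall x, mul (inv x) x = e) /\ (forall x, mul x (inv x) = e).

Definition finite_subset (G : Type) (S : G -> Prop) : Prop :=
  exists l : list G, forall x, S x <-> In x l.

Definition elt (G : Type) (S : G -> Prop) : Type := { x : G | S x }.
Definition config (G : Type) (S : G -> Prop) : Type := elt S -> bool.

Definition Res (G : Type) (S : G -> Prop) (s : elt S) (z : config S)
  : { x : G | S x /\ x <> proj1_sig s } -> bool :=
  fun y => z (exist _ (proj1_sig y) (proj1 (proj2_sig y))).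

Definition essential (G : Type) (S : G -> Prop) (s : elt S)
  (mu : config S -> bool) : Prop :=
  exists z w : config S, Res s z = Res s w /\ mu z <> mu w.

Definition generates (G : Type) (S : G -> Prop) (e0 : elt S)
  (P : config S -> Prop) (f : { z : config S | P z } -> bool)
  (mu : config S -> bool) : Prop :=
  (forall z, P z <-> mu z <> z e0) /\
  (forall zp : { z : config S | P z }, f zp = mu (proj1_sig zp)).

(* Main.v *)
Require Import Defs.
From Stdlib Require Import List.
From Stdlib Require Import Classical FunctionalExtensionality ProofIrrelevance Bool.

Lemma res_eq_aux (G : Type) (S : G -> Prop) (e : G) (heS : S e) (z w : config S) :
  Res (exist S e heS) z = Res (exist S e heS) w ->
  z (exist S e heS) = w (exist S e heS) -> z = w.
Proof.
  intros HR He. apply functional_extensionality. intros [x px].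
  destruct (classic (x = e)) as [Hx|Hx].
  - subst x. rewrite (proof_irrelevance _ px heS). exact He.
  - pose proof (f_equal (fun g => g (exist _ x (conj px Hx))) HR) as H.
    unfold Res in H; simpl in H; rewrite (proof_irrelevance _ (proj1 (conj px Hx)) px) in H; exact H.
Qed.

Theorem mainTheorem6
  (G : Type) (mul : G -> G -> G) (inv : G -> G) (e : G)
  (hG : is_group mul inv e)
  (S : G -> Prop) (hSfin : finite_subset S) (heS : S e)
  (mu : config S -> bool)
  (P : config S -> Prop) (f : { z : config S | P z } -> bool)
  (hgen : generates (exist S e heS) P f mu) :
  essential (exist S e heS) mu <->
  exists z w : config S,
    z <> w /\ Res (exist S e heS) z = Res (exist S e heS) w /\
    ((~ P z /\ ~ P w) \/ (P z /\ P w)).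
Proof.
  destruct hgen as [HP _].
  split.
  - intros [z [w [HR Hmu]]]. exists z, w.
    assert (Hne : z (exist S e heS) <> w (exist S e heS)).
    { intro Heq. apply Hmu. rewrite (res_eq_aux _ _ _ _ z w HR Heq). reflexivity. }
    split; [intro; subst; apply Hmu; reflexivity|]. split; [exact HR|].
    rewrite !HP.
    destruct (z (exist S e heS)), (w (exist S e heS)), (mu z), (mu w);
      try congruence; tauto.
  - intros [z [w [Hzw [HR Hc]]]]. exists z, w. split; [exact HR|].
    assert (Hne : z (exist S e heS) <> w (exist S e heS)).
    { intro Heq. apply Hzw. exact (res_eq_aux _ _ _ _ z w HR Heq). }
    rewrite !HP in Hc.
    destruct (z (exist S e heS)), (w (exist S e heS)), (mu z), (mu w);
      try congruence; (destruct Hc as [[H1 H2]|[H1 H2]]; try (exfalso; apply H1; congruence); try (exfalso; apply H2; congruence); congruence).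
Qed.
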